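(* Let $X\subset\mathbb{Z}^n$ and let $d$ be an $\ell_p$ metric on $X$ for some $1\le p\le\infty$, so that $(X,d,c_1)$ is a digital metric space. Let $T:X\to X$ be a weakly uniformly strict digital contraction. If $X$ is $c_1$-connected, then $T$ is constant.
   Context: Distinct $p,q\in\mathbb{Z}^n$ are $c_1$-adjacent if they differ by exactly $1$ in exactly one coordinate. $X$ is $c_1$-connected if the graph on $X$ given by $c_1$-adjacency is connected. The $\ell_p$ metric is $d(x,y)=(\sum_i|x_i-y_i|^p)^{1/p}$ for $1\le p<\infty$ and $\max_i|x_i-y_i|$ for $p=\infty$. $T:X\to X$ is a weakly uniformly strict digital contraction if for every $\varepsilon>0$ there exists $\delta>0$ such that for all $x,y\in X$, $\varepsilon\le d(x,y)<\varepsilon+\delta$ implies $d(T(x),T(y))<\varepsilon$. *)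

(* Defs.v *)
From HB Require Import structures.
From mathcomp Require Import all_boot all_order all_algebra.
From mathcomp Require Import all_classical all_reals.
From mathcomp Require Import exp.
Set Implicit Arguments. Unset Strict Implicit. Unset Printing Implicit Defensive.
Import Order.TTheory GRing.Theory Num.Theory.
Local Open Scope ring_scope.

Definition zpt (n : nat) := 'I_n -> int.

Definition c1_adj (n : nat) (x y : zpt n) : Prop :=
  exists i : 'I_n, `|x i - y i| = 1 /\ (forall j : 'I_n, j != i -> x j = y j).

Inductive c1_reach (n : nat) (X : set (zpt n)) : zpt n -> zpt n -> Prop :=
| c1_reach_refl x : X x -> c1_reach X x x
| c1_reach_step x y z : c1_reach X x y -> c1_adj y z -> X z -> c1_reach X x z.

Definition c1_connected (n : nat) (X : set (zpt n)) : Prop :=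
  forall x y, X x -> X y -> c1_reach X x y.

(* The l_p metric, p : \bar R with 1 <= p; p = +oo gives the max metric. *)
Definition lp_dist (R : realType) (n : nat) (p : \bar R) (x y : zpt n) : R :=
  match p with
  | EFin r => (\sum_(i < n) (`|x i - y i|%:~R : R) `^ r) `^ r^-1
  | _ => \big[Num.max/0]_(i < n) (`|x i - y i|%:~R : R)
  end.

Definition wus_contraction (R : realType) (n : nat) (X : set (zpt n))
  (d : zpt n -> zpt n -> R) (T : zpt n -> zpt n) : Prop :=
  forall eps : R, 0 < eps -> exists2 delta : R, 0 < delta &
    forall x y, X x -> X y -> eps <= d x y -> d x y < eps + delta ->
      d (T x) (T y) < eps.

(* Main.v *)
Require Import Defs.
From HB Require Import structures.
From mathcomp Require Import all_boot all_order all_algebra.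
From mathcomp Require Import all_classical all_reals exp.
Import Order.TTheory GRing.Theory Num.Theory.
Local Open Scope ring_scope.

Lemma adj_dist (R : realType) (n : nat) (p : \bar R) (hp : (1 <= p)%E)
  (x y : zpt n) : c1_adj x y -> lp_dist p x y = 1.
Proof.
move=> [i0 [h1 h2]].
have hf : forall i, (`|x i - y i|%:~R : R) = (i == i0)%:R.
  move=> i; case: eqP => [->|/eqP ne]; first by rewrite h1.
  by rewrite h2 // subrr.
case: p hp => [r| |] //= hp.
- rewrite lee_fin in hp.
  have r0 : r != 0 by apply/negP => /eqP r0; move: hp; rewrite r0 ler10.
  rewrite (bigD1 i0) //= big1 ?addr0.
    by rewrite hf eqxx powR1 powR1.
  by move=> i /negbTE ne; rewrite hf ne powR0.
- apply/le_anti/andP; split.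
    apply: bigmax_le => // i _; rewrite hf; by case: (i == i0).
  by have := le_bigmax 0 (fun i => (`|x i - y i|%:~R : R)) i0; rewrite hf eqxx.
Qed.

Lemma dist_ge1 (R : realType) (n : nat) (p : \bar R) (hp : (1 <= p)%E)
  (x y : zpt n) : x <> y -> 1 <= lp_dist p x y.
Proof.
move=> xy.
have [i hi] : exists i, x i != y i.
  apply: contrapT => hn; apply: xy; apply: funext => i.
  by apply/eqP; apply: contrapT => hn'; apply: hn; exists i; apply/negP.
have h1 : 1 <= (`|x i - y i|%:~R : R).
  by rewrite ler1z -gtz0_ge1 normr_gt0 subr_eq0.
have hge0 : forall j, 0 <= (`|x j - y j|%:~R : R).
  by move=> j; rewrite ler0z.
case: p hp => [r| |] //= hp.
- rewrite lee_fin in hp.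
  have hS : 1 <= \sum_(j < n) (`|x j - y j|%:~R : R) `^ r.
    rewrite (bigD1 i) //=.
    have hs : 0 <= \sum_(j < n | j != i) (`|x j - y j|%:~R : R) `^ r.
      by apply: sumr_ge0 => j _; exact: powR_ge0.
    apply: le_trans _ (ler_wpDr hs (lexx _)).
    exact: le_trans h1 (le1r_powR h1 hp).
  have := @ler_powR _ _ hS 0 r^-1; rewrite powRr0; apply; rewrite invr_ge0; apply: le_trans hp; exact: ler01.
- by apply: le_trans h1 _; exact: (le_bigmax 0 (fun j => (`|x j - y j|%:~R : R)) i).
Qed.

Theorem corollary8p6 (R : realType) (n : nat) (X : set (zpt n)) (p : \bar R)
  (hp : (1 <= p)%E) (T : zpt n -> zpt n) (hTX : forall x, X x -> X (T x))
  (hT : wus_contraction X (lp_dist p) T) (hX : c1_connected X) :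
  forall x y, X x -> X y -> T x = T y.
Proof.
have step : forall a b, X a -> X b -> c1_adj a b -> T a = T b.
  move=> a b Xa Xb hab.
  have [delta d0 hd] := hT 1 ltr01.
  have hab1 := @adj_dist _ _ _ hp _ _ hab.
  have lt1 : lp_dist p (T a) (T b) < 1.
    apply: hd => //; rewrite hab1 //.
    by rewrite ltrDl.
  apply: contrapT => ne.
  have h1 := @dist_ge1 _ _ _ hp _ _ ne.
  have := lt_le_trans lt1 h1.
  by rewrite ltxx.
move=> x y Xx Xy.
suff : X y /\ T x = T y by case.
elim: (hX x y Xx Xy) => [z Xz | a b c _ [Xb Hb] hbc Xc]; first by [].
split; first exact: Xc.
rewrite Hb; exact: (step b c Xb Xc hbc).
Qed.
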